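(* Let $d\ge0$ and let $a\in\mathbb K[A]$ be a homogeneous, irreducible, isobaric element invariant under $UT_3$ (i.e. $D_1(a)=D_2(a)=D_3(a)=0$) with $\mathrm{ord}_1(a)=d$ and $\mathrm{ord}_2(a)=0$. Then: (i) the vector space $\bar B_d$ spanned by the elements $\frac{1}{d(d-1)\cdots(d-i-j+1)}\hat D_1^{i}\hat D_3^{j}(a)$, $i+j\le d$, is an irreducible $\mathfrak{sl}_3$-submodule of $\mathbb K[A]$ isomorphic to $\Gamma_{d,0}$; (ii) the element $$\sum_{i+j\le d}\frac{1}{i!\,j!}\,\hat D_1^{i}\hat D_3^{j}(a)\,x_1^{d-(i+j)}x_2^{i}x_3^{j}\in\mathbb K[A,x_1,x_2,x_3]$$ (the Casimir element of $\bar B_d$ and $S^d(\langle x_1,x_2,x_3\rangle)$ with respect to dual bases) is a covariant of order $d$ of the ternary form of degree $n$.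
   Context: $\mathbb K$ is a field of characteristic $0$, $n\ge1$, $\mathbb K[A]=\mathbb K[a_{i,j}: i,j\ge0,\ i+j\le n]$ is the coordinate ring of the space of ternary forms $\sum_{i+j\le n}\frac{n!}{i!j!(n-i-j)!}a_{i,j}x_1^{n-i-j}x_2^ix_3^j$. $\mathfrak{sl}_3$ acts by derivations on $\mathbb K[A,x_1,x_2,x_3]$; the operators for $E_{12},E_{23},E_{13},E_{21},E_{32},E_{31},E_{11}-E_{22},E_{22}-E_{33}$ are $D_1,D_2,D_3,\hat D_1,\hat D_2,\hat D_3,E_1,E_2$, acting on the $x$'s by $D_1=-x_2\partial_{x_1}$, $D_2=-x_3\partial_{x_2}$, $D_3=-x_3\partial_{x_1}$, $\hat D_1=-x_1\partial_{x_2}$, $\hat D_2=-x_2\partial_{x_3}$, $\hat D_3=-x_1\partial_{x_3}$, $E_1=x_2\partial_{x_2}-x_1\partial_{x_1}$, $E_2=x_3\partial_{x_3}-x_2\partial_{x_2}$, and on generators of $\mathbb K[A]$ (with $a_{i,j}=0$ if an index is negative or $i+j>n$) by $D_1(a_{i,j})=i a_{i-1,j}$, $D_2(a_{i,j})=j a_{i+1,j-1}$, $D_3(a_{i,j})=j a_{i,j-1}$, $\hat D_1(a_{i,j})=(n-i-j)a_{i+1,j}$, $\hat D_2(a_{i,j})=i a_{i-1,j+1}$, $\hat D_3(a_{i,j})=(n-i-j)a_{i,j+1}$, $E_1(a_{i,j})=(n-2i-j)a_{i,j}$, $E_2(a_{i,j})=(i-j)a_{i,j}$. Isobaric means an eigenvector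 of both $E_1$ and $E_2$. $\mathrm{ord}_i(a)=\max\{s\ge0:\hat D_i^s(a)\ne0\}$ ($i=1,2$). ''Irreducible'' element of the invariant ring $\mathbb K[A]^{UT_3}$ is used in the classical sense (nonzero, not a polynomial in $UT_3$-invariants of smaller degree). A covariant of order $d$ is an element of $\mathbb K[A,x_1,x_2,x_3]$ homogeneous of degree $d$ in the $x$'s and annihilated by all the derivations above (equivalently $SL_3$-invariant). $\Gamma_{m_1,m_2}$ denotes the irreducible finite-dimensional $\mathfrak{sl}_3$-module of highest weight $[m_1,m_2]$. *)

(* Defs.v *)
From HB Require Import structures.
From mathcomp Require Import all_boot all_algebra.
From mathcomp Require Import mpoly.

Set Implicit Arguments.
Unset Strict Implicit.
Unset Printing Implicit Defensive.

Import GRing.Theory.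
Local Open Scope ring_scope.

Section TernaryForms.
Variables (K : fieldType) (n : nat).

Local Notation Idx := {ij : 'I_n.+1 * 'I_n.+1 | (ij.1 + ij.2 <= n)%N}.

Definition NA : nat := #|{: Idx}|.

(* K[A] = K[a_{i,j} : i + j <= n] *)
Definition KA := {mpoly K[NA]}.
(* K[A, x1, x2, x3] = K[A][x1, x2, x3]; x1 = 'X_0, x2 = 'X_1, x3 = 'X_2. *)
Definition KAx := {mpoly KA[3]}.

Definition aidx (i j : nat) : option 'I_NA :=
  if (i + j <= n)%N then
    omap (@enum_rank Idx) (insub ((inord i, inord j) : 'I_n.+1 * 'I_n.+1))
  else None.

(* the generator a_{i,j}, with the convention a_{i,j} = 0 if i + j > n *)
Definition avar (i j : nat) : KA :=
  if aidx i j is Some k then 'X_k else 0.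

Definition ia (k : 'I_NA) : nat := val (val (enum_val k)).1.
Definition ja (k : 'I_NA) : nat := val (val (enum_val k)).2.

Definition derA (f : nat -> nat -> KA) (p : KA) : KA :=
  \sum_(k < NA) mderiv k p * f (ia k) (ja k).

(* Values on generators.  Negative indices only occur with coefficient 0
   (natural-number truncation is harmless there). *)
Definition gD1 (i j : nat) : KA := i%:R * avar i.-1 j.
Definition gD2 (i j : nat) : KA := j%:R * avar i.+1 j.-1.
Definition gD3 (i j : nat) : KA := j%:R * avar i j.-1.
Definition gH1 (i j : nat) : KA := (n - (i + j))%:R * avar i.+1 j.
Definition gH2 (i j : nat) : KA := i%:R * avar i.-1 j.+1.
Definition gH3 (i j : nat) : KA := (n - (i + j))%:R * avar i j.+1.
Definition gE1 (i j : nat) : KA := ((n%:Z - 2 * i%:Z - j%:Z)%:~R) * avar i j.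
Definition gE2 (i j : nat) : KA := ((i%:Z - j%:Z)%:~R) * avar i j.

Definition D1 := derA gD1.
Definition D2 := derA gD2.
Definition D3 := derA gD3.
Definition hD1 := derA gH1.
Definition hD2 := derA gH2.
Definition hD3 := derA gH3.
Definition E1 := derA gE1.
Definition E2 := derA gE2.

Definition x1 : KAx := 'X_(@Ordinal 3 0 isT).
Definition x2 : KAx := 'X_(@Ordinal 3 1 isT).
Definition x3 : KAx := 'X_(@Ordinal 3 2 isT).

Definition derAx (f : nat -> nat -> KA) (g : 'I_3 -> KAx) (P : KAx) : KAx :=
  \sum_(m <- msupp P) (derA f P@_m *: 'X_[m])
  + \sum_(l < 3) mderiv l P * g l.

(* actions on x's:
   D1 = -x2 d/dx1, D2 = -x3 d/dx2, D3 = -x3 d/dx1,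
   hD1 = -x1 d/dx2, hD2 = -x2 d/dx3, hD3 = -x1 d/dx3,
   E1 = x2 d/dx2 - x1 d/dx1, E2 = x3 d/dx3 - x2 d/dx2 *)
Definition xv (v1 v2 v3 : KAx) (l : 'I_3) : KAx :=
  match val l with 0 => v1 | 1 => v2 | _ => v3 end.

Definition D1x := derAx gD1 (xv (- x2) 0 0).
Definition D2x := derAx gD2 (xv 0 (- x3) 0).
Definition D3x := derAx gD3 (xv (- x3) 0 0).
Definition hD1x := derAx gH1 (xv 0 (- x1) 0).
Definition hD2x := derAx gH2 (xv 0 0 (- x2)).
Definition hD3x := derAx gH3 (xv 0 0 (- x1)).
Definition E1x := derAx gE1 (xv (- x1) x2 0).
Definition E2x := derAx gE2 (xv 0 (- x2) x3).

Definition UTinv (p : KA) : Prop := D1 p = 0 /\ D2 p = 0 /\ D3 p = 0.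

Definition isobaric (p : KA) : Prop :=
  p != 0 /\ exists l1 l2 : K, E1 p = l1 *: p /\ E2 p = l2 *: p.

Definition has_ord (D : KA -> KA) (p : KA) (s : nat) : Prop :=
  iter s D p != 0 /\ forall t, (s < t)%N -> iter t D p = 0.

(* irreducible element of K[A]^{UT_3} in the classical sense: nonzero and not a
   polynomial in UT_3-invariants of smaller (total) degree.
   (msize p = 1 + total degree of p, for p <> 0.) *)
Definition UTirred (p : KA) : Prop :=
  p != 0 /\
  ~ (exists (m : nat) (Q : {mpoly K[m]}) (g : 'I_m -> KA),
        (forall k, UTinv (g k) /\ (msize (g k) < msize p)%N) /\ p = mmap (@mpolyC NA K) g Q).

Definition submod (V : KA -> Prop) : Prop :=
  V 0 /\ (forall u v, V u -> V v -> V (u + v)) /\ (forall (c : K) v, V v -> V (c *: v)) /\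
  (forall v, V v -> V (D1 v) /\ V (D2 v) /\ V (D3 v) /\ V (hD1 v) /\ V (hD2 v) /\
                   V (hD3 v) /\ V (E1 v) /\ V (E2 v)).

Definition irred_submod (V : KA -> Prop) : Prop :=
  submod V /\ (exists v, V v /\ v != 0) /\
  forall W : KA -> Prop, submod W -> (forall w, W w -> V w) ->
     (forall w, W w -> w = 0) \/ (forall v, V v -> W v).

(* V is a (finite-dimensional) irreducible sl_3-submodule isomorphic to
   Gamma_{m1,m2}, the irreducible module of highest weight [m1,m2]: it has a
   highest weight vector (killed by E12, E23, E13) of weight [m1,m2]. *)
Definition iso_Gamma (V : KA -> Prop) (m1 m2 : nat) : Prop :=
  irred_submod V /\
  (exists s : seq KA, forall p, V p <-> exists c : 'I_(size s) -> K,
                                        p = \sum_(i < size s) c i *: s`_i) /\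
  exists v, [/\ V v, v != 0, UTinv v, E1 v = m1%:R *: v & E2 v = m2%:R *: v].

Definition Bbar (a : KA) (d : nat) (p : KA) : Prop :=
  exists c : nat -> nat -> K,
    p = \sum_(i < d.+1) \sum_(j < d.+1 | (i + j <= d)%N)
          c i j *: (((d ^_ (i + j))%:R)^-1 *: iter i hD1 (iter j hD3 a)).

Definition casimir (a : KA) (d : nat) : KAx :=
  \sum_(i < d.+1) \sum_(j < d.+1 | (i + j <= d)%N)
     ((((i`! * j`!)%:R)^-1 : K) *: iter i hD1 (iter j hD3 a))
        *: (x1 ^+ (d - (i + j)) * x2 ^+ i * x3 ^+ j).

Definition covariant (d : nat) (P : KAx) : Prop :=
  P \is d.-homog /\
  (D1x P = 0 /\ D2x P = 0 /\ D3x P = 0 /\ hD1x P = 0 /\ hD2x P = 0 /\ hD3x P = 0 /\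
   E1x P = 0 /\ E2x P = 0).

End TernaryForms.

(* Main.v *)
Require Import Defs.
From HB Require Import structures.
From mathcomp Require Import all_boot all_algebra.
From mathcomp Require Import mpoly.
From mathcomp Require Import ring zify.
From Stdlib Require Import Classical.
Set Implicit Arguments.
Unset Strict Implicit.
Unset Printing Implicit Defensive.
Import GRing.Theory.
Local Open Scope ring_scope.

Section Basic.
Variables (K : fieldType) (n : nat).
Local Notation KA := (KA K n).
Implicit Types (f g h : nat -> nat -> KA) (p q : KA).

Lemma derA_is_linear f : linear (derA f).
Proof.
move=> c p q; rewrite /derA scaler_sumr -big_split /=; apply: eq_bigr => k _.
by rewrite mderivD mderivZ mulrDl scalerAl.
Qed.

HB.instance Definition _ f := GRing.isLinear.Build K KA KA _ (derA f) (derA_is_linear f).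

Lemma derAD f : {morph derA f : x y / x + y}.
Proof. exact: raddfD. Qed.

Lemma derAZ f (c : K) p : derA f (c *: p) = c *: derA f p.
Proof.
rewrite /derA scaler_sumr; apply: eq_bigr => k _; by rewrite mderivZ scalerAl.
Qed.

Lemma derAM f p q : derA f (p * q) = derA f p * q + p * derA f q.
Proof.
rewrite /derA mulr_suml mulr_sumr -big_split /=; apply: eq_bigr => k _.
rewrite mderivM; ring.
Qed.

Lemma derAC f (c : K) : derA f c%:MP = 0.
Proof. by rewrite /derA big1 // => k _; rewrite mderivC mul0r. Qed.

Lemma derA_nat f (k : nat) : derA f k%:R = 0.
Proof. by rewrite -(rmorph_nat (@mpolyC (NA n) K)) derAC. Qed.

Lemma derA_int f (z : int) : derA f z%:~R = 0.
Proof. by rewrite -(rmorph_int (@mpolyC (NA n) K)) derAC. Qed.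

Lemma derA_natM f (k : nat) p : derA f (k%:R * p) = k%:R * derA f p.
Proof. by rewrite derAM derA_nat mul0r add0r. Qed.

Lemma derA_intM f (z : int) p : derA f (z%:~R * p) = z%:~R * derA f p.
Proof. by rewrite derAM derA_int mul0r add0r. Qed.

Lemma derA_X f k : derA f 'X_k = f (ia k) (ja k).
Proof.
rewrite /derA (bigD1 k) //= big1 ?addr0.
  rewrite mderivX mnm1E eqxx (_ : (U_(k) - U_(k))%MM = 0%MM) ?mpolyX0 ?scale1r ?mul1r //.
  by apply/mnmP=> i; rewrite !mnmE subnn.
by move=> i /negbTE Hi; rewrite mderivX mnm1E eq_sym Hi scale0r mul0r.
Qed.

Lemma avar_out i j : ~~ (i + j <= n)%N -> avar K n i j = 0.
Proof. by move=> H; rewrite /avar /aidx (negbTE H). Qed.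

Lemma ia_ja_le (k : 'I_(NA n)) : (ia k + ja k <= n)%N.
Proof. exact: (valP (enum_val k)). Qed.

Lemma avar_ia (k : 'I_(NA n)) : avar K n (ia k) (ja k) = 'X_k.
Proof.
rewrite /avar /aidx ia_ja_le /ia /ja !inord_val.
have -> : (((val (enum_val k)).1, (val (enum_val k)).2) = val (enum_val k)).
  by case: (val (enum_val k)).
by rewrite valK /= enum_valK.
Qed.

Lemma avar_in i j : (i + j <= n)%N -> exists k, [/\ avar K n i j = 'X_k, ia k = i & ja k = j].
Proof.
move=> H.
have Hi : (i < n.+1)%N by lia.
have Hj : (j < n.+1)%N by lia.
pose x : 'I_n.+1 * 'I_n.+1 := (inord i, inord j).
have Hx : (x.1 + x.2 <= n)%N by rewrite /= !inordK.
pose y : {ij : 'I_n.+1 * 'I_n.+1 | (ij.1 + ij.2 <= n)%N} := exist _ x Hx.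
exists (enum_rank y); split.
- by rewrite /avar /aidx H insubT /=.
- by rewrite /ia enum_rankK /= inordK.
- by rewrite /ja enum_rankK /= inordK.
Qed.

Lemma derA_avar f i j : derA f (avar K n i j) = if (i + j <= n)%N then f i j else 0.
Proof.
case: ifP => H.
  by have [k [-> <- <-]] := avar_in H; rewrite derA_X.
by rewrite avar_out ?H // raddf0.
Qed.


Definition dd f g p := \sum_(k < NA n) \sum_(l < NA n)
   (mderiv l (mderiv k p) * (f (ia l) (ja l) * g (ia k) (ja k))).

Lemma derA_derA f g p : derA f (derA g p) =
   dd f g p + \sum_(k < NA n) mderiv k p * derA f (g (ia k) (ja k)).
Proof.
rewrite [derA g p]/derA raddf_sum /dd -big_split /=; apply: eq_bigr => k _.
rewrite derAM [derA f (mderiv _ _)]/derA mulr_suml; congr (_ + _).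
by apply: eq_bigr => l _; rewrite -!mulrA [X in _ * X]mulrC.
Qed.

Lemma dd_sym f g p : dd f g p = dd g f p.
Proof.
rewrite /dd exchange_big /=; apply: eq_bigr => k _; apply: eq_bigr => l _.
by rewrite mderiv_comm mulrC [g _ _ * _]mulrC (mulrC (mderiv _ _)).
Qed.

Lemma derA_comm f g h :
  (forall i j, (i + j <= n)%N -> derA f (g i j) - derA g (f i j) = h i j) ->
  forall p, derA f (derA g p) = derA g (derA f p) + derA h p.
Proof.
move=> H p; rewrite !derA_derA dd_sym -addrA; congr (_ + _).
apply/eqP; rewrite addrC -subr_eq; apply/eqP.
rewrite /derA -sumrB; apply: eq_bigr => k _.
by rewrite -mulrBr H // ia_ja_le.
Qed.

Ltac natsub := repeat match goal with
 | |- context [ ((?a - ?b)%N)%:R ] =>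
   first [ let Hs := fresh "Hs" in (have Hs : (b <= a)%N by lia); rewrite (natrB _ Hs); clear Hs
         | let Hs := fresh "Hs" in (have Hs : (a - b = 0)%N by lia); rewrite Hs; clear Hs ]
 end.

Ltac gen_tac :=
  let i := fresh "i" in let j := fresh "j" in let H := fresh "H" in
  move=> i j H;
  rewrite /gD1 /gD2 /gD3 /gH1 /gH2 /gH3 /gE1 /gE2 ?derA_natM ?derA_intM ?derA_avar
          /gD1 /gD2 /gD3 /gH1 /gH2 /gH3 /gE1 /gE2;
  (have [Hlt|Heq] : (i + j < n)%N \/ (i + j = n)%N by lia);
  destruct i as [|i]; destruct j as [|j]; rewrite /=;
  repeat (case: ifP => ?); try (exfalso; lia); natsub;
  try (match goal with H : (?a = n)%N |- _ =>
          let HR := fresh "HR" in let HZ := fresh "HZ" in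
          (have HR : (n%:R : KA) = (a%:R) by rewrite H);
          (have HZ : (n%:Z) = (a%:Z) by rewrite H);
          rewrite ?HR ?HZ end);
  ring.

Lemma derA_0f p : derA (fun _ _ => 0) p = 0.
Proof. by rewrite /derA big1 // => k _; rewrite mulr0. Qed.

Lemma derA_Nf g p : derA (fun i j => - g i j) p = - derA g p.
Proof. by rewrite /derA -sumrN; apply: eq_bigr => k _; rewrite mulrN. Qed.

Lemma derA_Df g g' p : derA (fun i j => g i j + g' i j) p = derA g p + derA g' p.
Proof. by rewrite /derA -big_split; apply: eq_bigr => k _; rewrite mulrDr. Qed.

Lemma derA_N2f g p : derA (fun i j => - (g i j *+ 2)) p = - (derA g p *+ 2).
Proof.
rewrite /derA -sumrMnl -sumrN; apply: eq_bigr => k _; by rewrite mulrN mulrnAr.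
Qed.

Lemma cF1F3 p : hD1 (hD3 p) = hD3 (hD1 p).
Proof. rewrite -[RHS]addr0 -(derA_0f p); apply: derA_comm; gen_tac. Qed.
Lemma cF2F1 p : hD2 (hD1 p) = hD1 (hD2 p) + hD3 p.
Proof. apply: derA_comm; gen_tac. Qed.
Lemma cF2F3 p : hD2 (hD3 p) = hD3 (hD2 p).
Proof. rewrite -[RHS]addr0 -(derA_0f p); apply: derA_comm; gen_tac. Qed.
Lemma cD1F1 p : D1 (hD1 p) = hD1 (D1 p) + E1 p.
Proof. apply: derA_comm; gen_tac. Qed.
Lemma cD1F3 p : D1 (hD3 p) = hD3 (D1 p) - hD2 p.
Proof. rewrite -derA_Nf; apply: derA_comm; gen_tac. Qed.
Lemma cD2F1 p : D2 (hD1 p) = hD1 (D2 p).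
Proof. rewrite -[RHS]addr0 -(derA_0f p); apply: derA_comm; gen_tac. Qed.
Lemma cD2F3 p : D2 (hD3 p) = hD3 (D2 p) + hD1 p.
Proof. apply: derA_comm; gen_tac. Qed.
Lemma cD2F2 p : D2 (hD2 p) = hD2 (D2 p) + E2 p.
Proof. apply: derA_comm; gen_tac. Qed.
Lemma cD3F1 p : D3 (hD1 p) = hD1 (D3 p) - D2 p.
Proof. rewrite -derA_Nf; apply: derA_comm; gen_tac. Qed.
Lemma cD3F3 p : D3 (hD3 p) = hD3 (D3 p) + (E1 p + E2 p).
Proof. rewrite -derA_Df; apply: derA_comm; gen_tac. Qed.
Lemma cE1F1 p : E1 (hD1 p) = hD1 (E1 p) - (hD1 p *+ 2).
Proof. rewrite -derA_N2f; apply: derA_comm; gen_tac. Qed.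
Lemma cE1F3 p : E1 (hD3 p) = hD3 (E1 p) - hD3 p.
Proof. rewrite -derA_Nf; apply: derA_comm; gen_tac. Qed.
Lemma cE2F1 p : E2 (hD1 p) = hD1 (E2 p) + hD1 p.
Proof. apply: derA_comm; gen_tac. Qed.
Lemma cE2F3 p : E2 (hD3 p) = hD3 (E2 p) - hD3 p.
Proof. rewrite -derA_Nf; apply: derA_comm; gen_tac. Qed.

End Basic.
Arguments cF1F3 {K n}.
Arguments cF2F1 {K n}.
Arguments cF2F3 {K n}.
Arguments cD1F1 {K n}.
Arguments cD1F3 {K n}.
Arguments cD2F1 {K n}.
Arguments cD2F3 {K n}.
Arguments cD2F2 {K n}.
Arguments cD3F1 {K n}.
Arguments cD3F3 {K n}.
Arguments cE1F1 {K n}.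
Arguments cE1F3 {K n}.
Arguments cE2F1 {K n}.
Arguments cE2F3 {K n}.

Ltac natsubB := repeat match goal with
 | |- context [ ((?a - ?b)%N)%:R ] =>
   first [ let Hs := fresh "Hs" in (have Hs : (b <= a)%N by lia); rewrite (natrB _ Hs); clear Hs
         | let Hs := fresh "Hs" in (have Hs : (a - b = 0)%N by lia); rewrite Hs; clear Hs ]
 end.

Section Gen.
Variables (K : fieldType) (V : lmodType K).
Implicit Types (X Y Z H : V -> V) (p q w : V).

Section Lin.
Variable X : V -> V.
Hypothesis XD : {morph X : x y / x + y}.
Hypothesis XZ : forall c p, X (c *: p) = c *: X p.

Lemma lin0 : X 0 = 0.
Proof. by have := XZ 0 0; rewrite !scale0r. Qed.

Lemma linMn p k : X (p *+ k) = X p *+ k.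
Proof. by rewrite -!scaler_nat XZ. Qed.

Lemma linN p : X (- p) = - X p.
Proof. by rewrite -scaleN1r XZ scaleN1r. Qed.

Lemma iter0v k : iter k X 0 = 0.
Proof. by elim: k => //= k ->; rewrite lin0. Qed.

Lemma iterZv k c p : iter k X (c *: p) = c *: iter k X p.
Proof. by elim: k => //= k ->; rewrite XZ. Qed.

Lemma iterMnv k m p : iter k X (p *+ m) = iter k X p *+ m.
Proof. by elim: k => //= k ->; rewrite linMn. Qed.

Lemma iterDv k p q : iter k X (p + q) = iter k X p + iter k X q.
Proof. by elim: k => //= k ->; rewrite XD. Qed.

Lemma iterNv k p : iter k X (- p) = - iter k X p.
Proof. by rewrite -scaleN1r iterZv scaleN1r. Qed.

Lemma iter_comm Y : (forall p, Y (X p) = X (Y p)) -> forall k w, Y (iter k X w) = iter k X (Y w).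
Proof. by move=> HY; elim=> //= k IH w; rewrite HY IH. Qed.

Lemma L_comm Y Z : (forall p, Y (X p) = X (Y p) + Z p) -> (forall p, Z (X p) = X (Z p)) ->
  forall i w, Y (iter i X w) = iter i X (Y w) + iter i.-1 X (Z w) *+ i.
Proof.
move=> HY HZ; elim=> [|i IH] w /=; first by rewrite mulr0n addr0.
rewrite HY IH XD linMn (iter_comm HZ).
case: i {IH} => [|i] /=; first by rewrite mulr0n addr0.
by rewrite -addrA -mulrSr.
Qed.

Lemma L_wt H c lam w : (forall p, H (X p) = X (H p) + c *: X p) -> H w = lam *: w ->
  forall k, H (iter k X w) = (lam + k%:R * c) *: iter k X w.
Proof.
move=> HH Hw; elim=> [|k IH] /=; first by rewrite mul0r addr0.
by rewrite HH IH XZ -scalerDl; congr (_ *: _); rewrite -addn1 natrD; ring.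
Qed.

Lemma L_sl2 Y H lam w : (forall p, Y (X p) = X (Y p) + H p) ->
  (forall p, H (X p) = X (H p) + (-2) *: X p) -> Y w = 0 -> H w = lam *: w ->
  forall i, Y (iter i X w) = (i%:R * (lam - i%:R + 1)) *: iter i.-1 X w.
Proof.
move=> HY HH Yw Hw; elim=> [|i IH] /=; first by rewrite Yw mul0r scale0r.
rewrite HY IH (L_wt HH Hw) XZ.
case: i {IH} => [|i] /=; first by rewrite !mul0r scale0r add0r; congr (_ *: _); ring.
by rewrite -scalerDl; congr (_ *: _); ring.
Qed.

End Lin.
End Gen.

Notation o0 := (@Ordinal 3 0 isT).
Notation o1 := (@Ordinal 3 1 isT).
Notation o2 := (@Ordinal 3 2 isT).

Lemma sum3 (R : Type) (idx : R) (op : Monoid.law idx) (F : 'I_3 -> R) :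
  \big[op/idx]_(l < 3) F l = op (op (F o0) (F o1)) (F o2).
Proof.
rewrite !big_ord_recr big_ord0 Monoid.mul1m /=.
by congr (op (op (F _) (F _)) (F _)); apply: val_inj.
Qed.

Section Mon.
Variables (R : comNzRingType).

Lemma mcoeffMX1 (P : {mpoly R[3]}) (k : 'I_3) m :
  (P * 'X_k)@_m = if (0 < m k)%N then P@_(m - U_(k))%MM else 0.
Proof.
case: ifP => Hk.
  have Hle : (U_(k) <= m)%MM.
    by apply/mnm_lepP => i; rewrite mnm1E; case: eqP => // <-.
  by rewrite -{1}(submK Hle) addmC mcoeffMX.
apply: memN_msupp_eq0; rewrite (perm_mem (msuppMX P U_(k))).
apply/mapP => [[m' _ Hm]]; move: Hk; rewrite Hm mnmDE mnm1E eqxx.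
by rewrite add1n.
Qed.

Lemma mon_eq (m : 'X_{1..3}) x y z :
  ((U_(o0) *+ x + U_(o1) *+ y + U_(o2) *+ z)%MM == m) = [&& m o0 == x, m o1 == y & m o2 == z].
Proof.
apply/eqP/and3P.
  by move=> <-; rewrite !mnmDE !mulmnE !mnm1E /= !mul0n !mul1n !addn0 add0n; split.
move=> [/eqP H0 /eqP H1 /eqP H2]; apply/mnmP => i.
rewrite !mnmDE !mulmnE !mnm1E.
case: i => [[|[|[|i]]] Hi] //=.
- have -> : Ordinal Hi = o0 by apply: val_inj.
  by rewrite H0 /=; lia.
- have -> : Ordinal Hi = o1 by apply: val_inj.
  by rewrite H1 /=; lia.
- have -> : Ordinal Hi = o2 by apply: val_inj.
  by rewrite H2 /=; lia.
Qed.

End Mon.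

Section Main.
Variables (K : fieldType) (n : nat) (a : KA K n) (d : nat).
Hypothesis charK0 : [pchar K] =i pred0.
Hypothesis aD1 : D1 a = 0.
Hypothesis aD2 : D2 a = 0.
Hypothesis aD3 : D3 a = 0.
Hypothesis aF2 : hD2 a = 0.
Hypothesis aF1d : iter d.+1 (@hD1 K n) a = 0.
Hypothesis aF1dn : iter d (@hD1 K n) a != 0.
Hypothesis a0 : a != 0.
Variables (l1 l2 : K).
Hypothesis aE1 : E1 a = l1 *: a.
Hypothesis aE2 : E2 a = l2 *: a.

Local Notation KA := (KA K n).
Local Notation F1 := (@hD1 K n).
Local Notation F2 := (@hD2 K n).
Local Notation F3 := (@hD3 K n).
Local Notation e1 := (@D1 K n).
Local Notation e2 := (@D2 K n).
Local Notation e3 := (@D3 K n).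
Local Notation h1 := (@E1 K n).
Local Notation h2 := (@E2 K n).

Lemma natK_neq0 k : (0 < k)%N -> (k%:R : K) != 0.
Proof. by move=> Hk; rewrite ((pcharf0P K).1 charK0 k) -lt0n. Qed.

Let F1D : {morph F1 : x y / x + y} := derAD (gH1 K n).
Let F1Z : forall c p, F1 (c *: p) = c *: F1 p := derAZ (gH1 K n).
Let F2D : {morph F2 : x y / x + y} := derAD (gH2 K n).
Let F2Z : forall c p, F2 (c *: p) = c *: F2 p := derAZ (gH2 K n).
Let F3D : {morph F3 : x y / x + y} := derAD (gH3 K n).
Let F3Z : forall c p, F3 (c *: p) = c *: F3 p := derAZ (gH3 K n).
Let e1D : {morph e1 : x y / x + y} := derAD (gD1 K n).
Let e1Z : forall c p, e1 (c *: p) = c *: e1 p := derAZ (gD1 K n).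
Let e2D : {morph e2 : x y / x + y} := derAD (gD2 K n).
Let e2Z : forall c p, e2 (c *: p) = c *: e2 p := derAZ (gD2 K n).
Let e3D : {morph e3 : x y / x + y} := derAD (gD3 K n).
Let e3Z : forall c p, e3 (c *: p) = c *: e3 p := derAZ (gD3 K n).
Let h1D : {morph h1 : x y / x + y} := derAD (gE1 K n).
Let h1Z : forall c p, h1 (c *: p) = c *: h1 p := derAZ (gE1 K n).
Let h2D : {morph h2 : x y / x + y} := derAD (gE2 K n).
Let h2Z : forall c p, h2 (c *: p) = c *: h2 p := derAZ (gE2 K n).

Lemma cE1F1' p : h1 (F1 p) = F1 (h1 p) + (-2) *: F1 p.
Proof. by rewrite cE1F1 scaleNr scaler_nat. Qed.
Lemma cE1F3' p : h1 (F3 p) = F3 (h1 p) + (-1) *: F3 p.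
Proof. by rewrite cE1F3 scaleN1r. Qed.
Lemma cE2F1' p : h2 (F1 p) = F1 (h2 p) + 1 *: F1 p.
Proof. by rewrite cE2F1 scale1r. Qed.
Lemma cE2F3' p : h2 (F3 p) = F3 (h2 p) + (-1) *: F3 p.
Proof. by rewrite cE2F3 scaleN1r. Qed.

Lemma E2a : h2 a = 0.
Proof. by move: (cD2F2 a); rewrite aF2 aD2 (lin0 e2Z) (lin0 F2Z) add0r. Qed.

Lemma l2_0 : l2 = 0.
Proof. by apply/eqP; move: (E2a); rewrite aE2 => /eqP; rewrite scaler_eq0 (negbTE a0) orbF. Qed.

Lemma l1d : l1 = d%:R.
Proof.
have := L_sl2 F1Z cD1F1 cE1F1' aD1 aE1 d.+1.
rewrite aF1d (lin0 e1Z) /= => /esym/eqP; rewrite scaler_eq0 (negbTE aF1dn) orbF mulf_eq0.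
rewrite (negbTE (natK_neq0 (ltn0Sn d))) /= => /eqP H.
have -> : l1 = (l1 - d.+1%:R + 1) + d%:R by ring.
by rewrite H add0r.
Qed.


Lemma aE1' : h1 a = d%:R *: a.
Proof. by rewrite aE1 l1d. Qed.
Lemma aE2' : h2 a = 0 *: a.
Proof. by rewrite aE2 l2_0. Qed.

Definition v i j := iter i F1 (iter j F3 a).

Lemma vF1 i j : F1 (v i j) = v i.+1 j.
Proof. by []. Qed.

Lemma vF3 i j : F3 (v i j) = v i j.+1.
Proof. by rewrite /v (iter_comm (fun p => esym (cF1F3 p))). Qed.

Lemma vF2 i j : F2 (v i j) = v i.-1 j.+1 *+ i.
Proof.
rewrite /v (L_comm F1D F1Z cF2F1 (fun p => esym (cF1F3 p))).
by rewrite (iter_comm cF2F3) aF2 !(iter0v F3Z) (iter0v F1Z) add0r.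
Qed.

Lemma wtF3 j : h1 (iter j F3 a) = (d%:R + j%:R * (-1)) *: iter j F3 a.
Proof. exact: (L_wt F3Z cE1F3' aE1'). Qed.

Lemma h1v i j : h1 (v i j) = ((d%:R + j%:R * (-1)) + i%:R * (-2)) *: v i j.
Proof. exact: (L_wt F1Z cE1F1' (wtF3 j)). Qed.

Lemma h2v i j : h2 (v i j) = ((0 + j%:R * (-1)) + i%:R * 1) *: v i j.
Proof. exact: (L_wt F1Z cE2F1' (L_wt F3Z cE2F3' aE2' j)). Qed.

Lemma e1w j : e1 (iter j F3 a) = 0.
Proof.
have HZ p : - F2 (F3 p) = F3 (- F2 p) by rewrite cF2F3 (linN F3Z).
rewrite (L_comm F3D F3Z (Y:=e1) (Z:=fun p => - F2 p) cD1F3 HZ).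
by rewrite aD1 aF2 oppr0 !(iter0v F3Z) add0r mul0rn.
Qed.

Lemma e1v i j : e1 (v i j) = (i%:R * ((d%:R + j%:R * (-1)) - i%:R + 1)) *: v i.-1 j.
Proof. exact: (L_sl2 F1Z cD1F1 cE1F1' (e1w j) (wtF3 j)). Qed.

Lemma e2w j : e2 (iter j F3 a) = F1 (iter j.-1 F3 a) *+ j.
Proof.
rewrite (L_comm F3D F3Z cD2F3 cF1F3) aD2 (iter0v F3Z) add0r.
by rewrite (iter_comm cF1F3).
Qed.

Lemma e2v i j : e2 (v i j) = v i.+1 j.-1 *+ j.
Proof. by rewrite /v (iter_comm cD2F1) e2w (iterMnv F1Z) -iterSr. Qed.

Lemma e3w j : e3 (iter j F3 a) = (j%:R * (d%:R - j%:R + 1)) *: iter j.-1 F3 a.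
Proof.
have HH p : h1 (F3 p) + h2 (F3 p) = F3 (h1 p + h2 p) + (-2) *: F3 p.
  rewrite cE1F3' cE2F3' F3D addrACA -scalerDl; congr (_ + (_ *: _)); ring.
have Hw : h1 a + h2 a = (d%:R + 0) *: a by rewrite aE1' aE2' scalerDl.
rewrite (L_sl2 F3Z (Y:=e3) (H:=fun p => h1 p + h2 p) cD3F3 HH aD3 Hw).
congr (_ *: _); ring.
Qed.

Lemma e3v i j : e3 (v i j) = (j%:R * (d%:R - j%:R + 1) - i%:R * j%:R) *: v i j.-1.
Proof.
have HZ p : - e2 (F1 p) = F1 (- e2 p) by rewrite cD2F1 (linN F1Z).
rewrite /v (L_comm F1D F1Z (Y:=e3) (Z:=fun p => - e2 p) cD3F1 HZ).
rewrite e3w e2w (iterZv F1Z).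
case: i => [|i] /=; first by rewrite mulr0n addr0 mul0r subr0.
rewrite (iterNv F1Z) (iterMnv F1Z) -iterSr mulNrn -!scaler_nat scalerA -scaleNr -scalerDl.
by congr (_ *: _); ring.
Qed.


Lemma e1v_nat i j : (i + j <= d)%N -> e1 (v i j) = (i * (d.+1 - (i + j)))%:R *: v i.-1 j.
Proof. by move=> H; rewrite e1v; congr (_ *: _); rewrite natrM; natsubB; rewrite !natrD; ring. Qed.

Lemma e3v_nat i j : (i + j <= d)%N -> e3 (v i j) = (j * (d.+1 - (i + j)))%:R *: v i j.-1.
Proof. by move=> H; rewrite e3v; congr (_ *: _); rewrite natrM; natsubB; rewrite !natrD; ring. Qed.

Lemma mulrn_eq0K (x : KA) k : (0 < k)%N -> x *+ k = 0 -> x = 0.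
Proof.
move=> Hk /eqP; rewrite -scaler_nat scaler_eq0 (negbTE (natK_neq0 Hk)) /=.
by move/eqP.
Qed.

Lemma v_top j : (j <= d.+1)%N -> v (d.+1 - j) j = 0.
Proof.
elim: j => [|j IH] Hj; first by rewrite subn0.
have := vF2 (d.+1 - j) j; rewrite IH; last by lia.
rewrite (lin0 F2Z) (_ : (d.+1 - j).-1 = d.+1 - j.+1)%N; last by lia.
by move/esym/mulrn_eq0K; apply; lia.
Qed.

Lemma v_zero i j : (d < i + j)%N -> v i j = 0.
Proof.
move=> H; have [k Hk] : exists k, (i + j = d.+1 + k)%N by exists (i + j - d.+1)%N; lia.
elim: k i j Hk {H} => [|k IH] i j Hk.
  have -> : i = (d.+1 - j)%N by lia.
  by apply: v_top; lia.
case: i Hk => [|i] Hk.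
  case: j Hk => [|j] Hk; first by lia.
  by rewrite -vF3 IH ?(lin0 F3Z) //; lia.
by rewrite -vF1 IH ?(lin0 F1Z) //; lia.
Qed.


Local Notation B := (Bbar a d).
Local Notation sc i j := (((d ^_ (i + j))%:R : K)^-1).

Lemma B0 : B 0.
Proof. by exists (fun _ _ => 0); rewrite big1 // => i _; rewrite big1 // => j _; rewrite scale0r. Qed.

Lemma BD p q : B p -> B q -> B (p + q).
Proof.
move=> [c ->] [c' ->]; exists (fun i j => c i j + c' i j).
rewrite -big_split; apply: eq_bigr => i _; rewrite -big_split; apply: eq_bigr => j _.
by rewrite scalerDl.
Qed.

Lemma BZ k p : B p -> B (k *: p).
Proof.
move=> [c ->]; exists (fun i j => k * c i j).
rewrite scaler_sumr; apply: eq_bigr => i _; rewrite scaler_sumr; apply: eq_bigr => j _.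
by rewrite scalerA.
Qed.

Lemma BMn k p : B p -> B (p *+ k).
Proof. by move=> Hp; rewrite -scaler_nat; apply: BZ. Qed.

Lemma sum_single (G : nat -> nat -> KA) i0 j0 : (i0 + j0 <= d)%N ->
  (forall i j, (i + j <= d)%N -> (i != i0) || (j != j0) -> G i j = 0) ->
  \sum_(i < d.+1) \sum_(j < d.+1 | (i + j <= d)%N) G i j = G i0 j0.
Proof.
move=> Hij HG.
have Hi : (i0 < d.+1)%N by lia.
have Hj : (j0 < d.+1)%N by lia.
rewrite (bigD1 (Ordinal Hi)) //= (bigD1 (Ordinal Hj)) /=; last by [].
rewrite big1 ?addr0; last first.
  by move=> j /andP [Hj' Hne]; apply: HG => //; rewrite Hne orbT.
rewrite big1 ?addr0 //.
move=> i Hne; apply: big1 => j Hj'; apply: HG => //.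
by rewrite Hne.
Qed.

Lemma sc_neq0 i j : (i + j <= d)%N -> sc i j != 0.
Proof. by move=> H; rewrite invr_eq0 natK_neq0 // ffact_gt0. Qed.

Lemma Bv i j : B (v i j).
Proof.
case: (leqP (i + j) d) => H; last by rewrite v_zero //; exact: B0.
exists (fun i' j' => if (i' == i) && (j' == j) then (d ^_ (i + j))%:R else 0).
rewrite (@sum_single (fun i' j' => (if (i' == i) && (j' == j) then (d ^_ (i + j))%:R else 0) *:
   (sc i' j' *: v i' j')) i j H) /=; last first.
  by move=> i' j' _ /orP [] /negbTE ->; rewrite ?andbF scale0r.
rewrite !eqxx /= scalerA mulfV ?scale1r //.
by rewrite natK_neq0 // ffact_gt0.
Qed.

Lemma Bsum (I : Type) (r : seq I) (P : pred I) (F : I -> KA) :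
  (forall i, P i -> B (F i)) -> B (\sum_(i <- r | P i) F i).
Proof. by move=> HF; apply: big_ind => //; [exact: B0 | exact: BD]. Qed.

Lemma B_closed (X : KA -> KA) : {morph X : x y / x + y} -> (forall c p, X (c *: p) = c *: X p) ->
  (forall i j, (i + j <= d)%N -> B (X (v i j))) -> forall p, B p -> B (X p).
Proof.
move=> XD XZ Hv p [c ->].
rewrite (big_morph X XD (lin0 XZ)); apply: Bsum => i _.
rewrite (big_morph X XD (lin0 XZ)); apply: Bsum => j Hj.
by rewrite !XZ; do 2 apply: BZ; apply: Hv.
Qed.

Lemma B_submod : submod B.
Proof.
split; first exact: B0.
split; first exact: BD.
split; first exact: BZ.
move=> p Hp; split; [|split; [|split; [|split; [|split; [|split; [|split]]]]]];
  apply: B_closed Hp => //; move=> i j Hij.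
- by rewrite e1v_nat //; apply: BZ; apply: Bv.
- by rewrite e2v; apply: BMn; apply: Bv.
- by rewrite e3v_nat //; apply: BZ; apply: Bv.
- by rewrite vF1; apply: Bv.
- by rewrite vF2; apply: BMn; apply: Bv.
- by rewrite vF3; apply: Bv.
- by rewrite h1v; apply: BZ; apply: Bv.
- by rewrite h2v; apply: BZ; apply: Bv.
Qed.


Lemma W_v (W : KA -> Prop) : submod W -> W a -> forall i j, W (v i j).
Proof.
move=> [W0 [WD [WZ Wops]]] Wa; elim=> [|i IH] j.
  elim: j => [|j IHj] //; rewrite -vF3.
  by have [_ [_ [_ [_ [_ [H3 _]]]]]] := Wops _ IHj.
by rewrite -vF1; have [_ [_ [_ [H1 _]]]] := Wops _ (IH j).
Qed.

Lemma W_B (W : KA -> Prop) : submod W -> W a -> forall p, B p -> W p.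
Proof.
move=> HW Wa p [c ->]; case: (HW) => W0 [WD [WZ _]].
apply: big_ind => [|x y|i _]; [exact: W0|exact: WD|].
apply: big_ind => [|x y|j _]; [exact: W0|exact: WD|].
by apply: (WZ); apply: (WZ); apply: (W_v HW Wa).
Qed.

Lemma it_e3 t i j : (i + j <= d)%N -> (t <= j)%N ->
  exists2 k : K, k != 0 & iter t e3 (v i j) = k *: v i (j - t).
Proof.
move=> Hij; elim: t => [|t IH] Ht; first by exists 1; rewrite ?oner_neq0 ?subn0 ?scale1r.
rewrite iterS; have [k Hk ->] := IH (ltnW Ht).
rewrite e3Z e3v_nat; last by lia.
rewrite scalerA (_ : (j - t).-1 = j - t.+1)%N; last by lia.
exists (k * ((j - t) * (d.+1 - (i + (j - t))))%:R) => //.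
rewrite mulf_neq0 // natK_neq0 // muln_gt0; apply/andP; split; lia.
Qed.

Lemma it_e3_0 t i j : (i + j <= d)%N -> (j < t)%N -> iter t e3 (v i j) = 0.
Proof.
move=> Hij Ht; have -> : t = ((t - j.+1) + j.+1)%N by lia.
rewrite iterD /= ; have [k Hk ->] := it_e3 Hij (leqnn j).
by rewrite e3Z e3v_nat ?subnn ?mul0n ?scale0r ?scaler0 ?(iter0v e3Z) //; lia.
Qed.

Lemma it_e1 t i j : (i + j <= d)%N -> (t <= i)%N ->
  exists2 k : K, k != 0 & iter t e1 (v i j) = k *: v (i - t) j.
Proof.
move=> Hij; elim: t => [|t IH] Ht; first by exists 1; rewrite ?oner_neq0 ?subn0 ?scale1r.
rewrite iterS; have [k Hk ->] := IH (ltnW Ht).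
rewrite e1Z e1v_nat; last by lia.
rewrite scalerA (_ : (i - t).-1 = i - t.+1)%N; last by lia.
exists (k * ((i - t) * (d.+1 - ((i - t) + j)))%:R) => //.
rewrite mulf_neq0 // natK_neq0 // muln_gt0; apply/andP; split; lia.
Qed.

Lemma it_e1_0 t i j : (i + j <= d)%N -> (i < t)%N -> iter t e1 (v i j) = 0.
Proof.
move=> Hij Ht; have -> : t = ((t - i.+1) + i.+1)%N by lia.
rewrite iterD /= ; have [k Hk ->] := it_e1 Hij (leqnn i).
by rewrite e1Z e1v_nat ?subnn ?mul0n ?scale0r ?scaler0 ?(iter0v e1Z) //; lia.
Qed.

Lemma B_irred : irred_submod B.
Proof.
split; first exact: B_submod.
split; first by exists a; split; [exact: (Bv 0 0) | exact: a0].
move=> W HW HWB.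
case: (classic (exists w, W w /\ w != 0)) => [[w [Ww w0]] | Hno]; last first.
  left => w Ww; case: (eqVneq w 0) => // Hn; exfalso; apply: Hno; by exists w.
right; apply: W_B => //.
have [W0 [WD [WZ Wops]]] := HW.
have [c Hc] := HWB w Ww.
pose P := fun x : 'I_d.+1 * 'I_d.+1 => (x.1 + x.2 <= d)%N && (c x.1 x.2 != 0).
have [x Px] : exists x, P x.
  case: (pickP P) => [x Px | HP]; first by exists x.
  exfalso; move/eqP: w0; apply; rewrite Hc big1 // => i _; rewrite big1 // => j Hj.
  by have := HP (i, j); rewrite /P /= Hj /= => /negbFE/eqP ->; rewrite scale0r.
have [y Py Hmax] := @arg_maxnP _ x P (fun y => (y.1 + y.2)%N) Px.
move/andP: Py => [Hy cy].
pose T p := iter (y.1 : nat) e1 (iter (y.2 : nat) e3 p).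
have TD : {morph T : p q / p + q} by move=> p q; rewrite /T !(iterDv e3D) (iterDv e1D).
have TZ : forall k p, T (k *: p) = k *: T p by move=> k p; rewrite /T !(iterZv e3Z) (iterZv e1Z).
have WT : forall p, W p -> W (T p).
  move=> p Wp; rewrite /T.
  have H3 : forall t q, W q -> W (iter t e3 q).
    elim=> [|t IH] q Wq //=; by have [_ [_ [H _]]] := Wops _ (IH q Wq).
  have H1 : forall t q, W q -> W (iter t e1 q).
    elim=> [|t IH] q Wq //=; by have [H _] := Wops _ (IH q Wq).
  by apply: H1; apply: H3.
have [k Hk Tv0] : exists2 k, k != 0 & T (v y.1 y.2) = k *: a.
  rewrite /T; have [k3 Hk3 ->] := it_e3 Hy (leqnn _).
  have Hy' : (y.1 + (y.2 - y.2) <= d)%N by rewrite subnn addn0 (leq_trans _ Hy) // leq_addr.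
  rewrite (iterZv e1Z); have [k1 Hk1 ->] := it_e1 Hy' (leqnn _).
  by exists (k3 * k1); rewrite ?mulf_neq0 // scalerA !subnn.
have Tvz : forall i j, (i + j <= d)%N -> (i < y.1)%N || (j < y.2)%N -> T (v i j) = 0.
  move=> i j Hij Hlt; rewrite /T.
  case: (ltnP j y.2) => Hj; first by rewrite it_e3_0 // (iter0v e1Z).
  have [k3 _ ->] := it_e3 Hij Hj.
  by rewrite (iterZv e1Z) it_e1_0 ?scaler0 //; lia.
have TW : T w = c y.1 y.2 *: (sc y.1 y.2 *: (k *: a)).
  rewrite Hc (big_morph T TD (lin0 TZ)).
  under eq_bigr do rewrite (big_morph T TD (lin0 TZ)).
  under eq_bigr do under eq_bigr do rewrite !TZ.
  rewrite (@sum_single (fun i j => c i j *: (sc i j *: T (v i j))) y.1 y.2 Hy) /=; first by rewrite Tv0.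
  move=> i j Hij Hne; case: (eqVneq (c i j) 0) => [->|cij]; first by rewrite scale0r.
  have Hi : (i < d.+1)%N by lia.
  have Hj : (j < d.+1)%N by lia.
  have := Hmax (Ordinal Hi, Ordinal Hj); rewrite /P /= Hij cij /= => /(_ isT) Hle.
  have Hle' : (i + j <= y.1 + y.2)%N := Hle; clear Hle.
  rewrite Tvz ?scaler0 //; apply/orP; move: Hne Hle'.
  set u := (y.1 : nat); set u' := (y.2 : nat); move=> /orP [] /eqP H0 H1; lia.
have -> : a = (c y.1 y.2 * sc y.1 y.2 * k)^-1 *: T w.
  rewrite TW !scalerA -!mulrA mulVf ?scale1r //.
  by rewrite !mulf_neq0 // sc_neq0.
by apply: WZ; apply: WT.
Qed.

Definition sl := [seq v (nat_of_ord x.1) (nat_of_ord x.2) | x : 'I_d.+1 * 'I_d.+1 <- enum (predT : pred ('I_d.+1 * 'I_d.+1))].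
Definition Span p := exists c : 'I_(size sl) -> K, p = \sum_(k < size sl) c k *: sl`_k.

Lemma Span_B p : Span p <-> B p.
Proof.
split.
  move=> [c ->]; apply: Bsum => k _; apply: BZ.
  have : sl`_k \in sl by apply: mem_nth.
  by case/mapP => x _ ->; apply: Bv.
move=> [c ->].
have S0 : Span 0 by exists (fun _ => 0); rewrite big1 // => k _; rewrite scale0r.
have SD : forall p q, Span p -> Span q -> Span (p + q).
  move=> p1 q1 [c1 ->] [c2 ->]; exists (fun k => c1 k + c2 k).
  by rewrite -big_split; apply: eq_bigr => k _; rewrite scalerDl.
have SZ : forall (r : K) p, Span p -> Span (r *: p).
  move=> r p1 [c1 ->]; exists (fun k => r * c1 k).
  by rewrite scaler_sumr; apply: eq_bigr => k _; rewrite scalerA.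
apply: big_ind => // i _; apply: big_ind => // j _; apply: (SZ); apply: (SZ).
have Hin : v i j \in sl by apply/mapP; exists (i, j); rewrite ?mem_enum.
have Hk : (index (v i j) sl < size sl)%N by rewrite index_mem.
exists (fun k => (k == Ordinal Hk)%:R).
rewrite (bigD1 (Ordinal Hk)) //= eqxx scale1r big1 ?addr0 /= ?nth_index //.
by move=> k /negbTE ->; rewrite scale0r.
Qed.

Lemma partI : iso_Gamma B d 0.
Proof.
split; first exact: B_irred.
split; first by exists sl => p; rewrite -Span_B.
exists a; split.
- exact: (Bv 0 0).
- exact: a0.
- by split; [|split].
- exact: aE1'.
- by rewrite E2a scale0r.
Qed.


Definition sw i j : K := ((i`! * j`!)%:R)^-1.
Definition w i j : KA := sw i j *: v i j.

Lemma fact_nz k : (k`!%:R : K) != 0.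
Proof. exact: natK_neq0 (fact_gt0 k). Qed.

Lemma sw_S1 i j : sw i j = sw i.+1 j * i.+1%:R.
Proof.
rewrite /sw factS !natrM; field.
by rewrite !fact_nz /= -[1 + _](natrD _ 1 i) natK_neq0.
Qed.

Lemma sw_S2 i j : sw i j = sw i j.+1 * j.+1%:R.
Proof.
rewrite /sw (factS j) !natrM; field.
by rewrite !fact_nz /= -[1 + _](natrD _ 1 j) natK_neq0.
Qed.

Lemma w_zero i j : (d < i + j)%N -> w i j = 0.
Proof. by move=> H; rewrite /w v_zero // scaler0. Qed.

Lemma wF1 i j : F1 (w i j) = w i.+1 j *+ i.+1.
Proof. by rewrite /w F1Z vF1 -scaler_nat scalerA mulrC -sw_S1. Qed.

Lemma wF3 i j : F3 (w i j) = w i j.+1 *+ j.+1.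
Proof. by rewrite /w F3Z vF3 -scaler_nat scalerA mulrC -sw_S2. Qed.

Lemma wF2 i j : F2 (w i.+1 j) = w i j.+1 *+ j.+1.
Proof.
rewrite /w F2Z vF2 /= -!scaler_nat !scalerA; congr (_ *: _).
by rewrite -sw_S1 sw_S2 mulrC.
Qed.

Lemma wF2_0 j : F2 (w 0 j) = 0.
Proof. by rewrite /w F2Z vF2 mulr0n scaler0. Qed.

Lemma wD1 i j : (i.+1 + j <= d)%N -> e1 (w i.+1 j) = w i j *+ (d - (i + j)).
Proof.
move=> H; rewrite /w e1Z e1v_nat // /= -!scaler_nat !scalerA; congr (_ *: _).
rewrite (_ : (d.+1 - (i.+1 + j)) = d - (i + j))%N; last by lia.
by rewrite natrM mulrA -sw_S1 mulrC.
Qed.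

Lemma wD1_0 j : e1 (w 0 j) = 0.
Proof. by rewrite /w e1Z e1v mul0r !scale0r scaler0. Qed.

Lemma wD2 i j : e2 (w i j.+1) = w i.+1 j *+ i.+1.
Proof.
rewrite /w e2Z e2v /= -!scaler_nat !scalerA; congr (_ *: _).
by rewrite -sw_S2 sw_S1 mulrC.
Qed.

Lemma wD2_0 i : e2 (w i 0) = 0.
Proof. by rewrite /w e2Z e2v mulr0n scaler0. Qed.

Lemma wD3 i j : (i + j.+1 <= d)%N -> e3 (w i j.+1) = w i j *+ (d - (i + j)).
Proof.
move=> H; rewrite /w e3Z e3v_nat // /= -!scaler_nat !scalerA; congr (_ *: _).
rewrite (_ : (d.+1 - (i + j.+1)) = d - (i + j))%N; last by lia.
by rewrite natrM mulrA -sw_S2 mulrC.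
Qed.

Lemma wD3_0 i : e3 (w i 0) = 0.
Proof. by rewrite /w e3Z e3v mul0r mulr0 subrr !scale0r scaler0. Qed.

Lemma wE1 i j : h1 (w i j) = ((d%:R + j%:R * (-1)) + i%:R * (-2)) *: w i j.
Proof. by rewrite /w h1Z h1v !scalerA mulrC. Qed.

Lemma wE2 i j : h2 (w i j) = ((0 + j%:R * (-1)) + i%:R * 1) *: w i j.
Proof. by rewrite /w h2Z h2v !scalerA mulrC. Qed.


Local Notation KAx := (KAx K n).

Lemma derAx_coef f g (P : KAx) m :
  (derAx f g P)@_m = derA f P@_m + (\sum_(l < 3) mderiv l P * g l)@_m.
Proof.
rewrite /derAx mcoeffD; congr (_ + _).
rewrite raddf_sum /=.
under eq_bigr do rewrite mcoeffZ mcoeffX.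
case: (boolP (m \in msupp P)) => Hm.
  rewrite (bigD1_seq m) //= ?msupp_uniq // eqxx mulr1 big1 ?addr0 //.
  by move=> m' /negbTE ->; rewrite mulr0.
rewrite big1_seq; first by rewrite memN_msupp_eq0 // raddf0.
move=> m' Hm'; have : m' != m by apply: contraNneq Hm => <-.
by move/negbTE ->; rewrite mulr0.
Qed.

Lemma cas_w : casimir a d = \sum_(i < d.+1) \sum_(j < d.+1 | (i + j <= d)%N)
   w i j *: 'X_[U_(o0) *+ (d - (i + j)) + U_(o1) *+ i + U_(o2) *+ j]%MM.
Proof.
rewrite /casimir; apply: eq_bigr => i _; apply: eq_bigr => j _.
by rewrite /x1 /x2 /x3 !mpolyXn -!mpolyXD.
Qed.

Lemma cas_coef m : (casimir a d)@_m =
  if (m o0 + m o1 + m o2 == d)%N then w (m o1) (m o2) else 0.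
Proof.
rewrite cas_w (big_morph (fun p : KAx => p@_m) (mcoeffD m) (mcoeff0 _ m)).
under eq_bigr do rewrite (big_morph (fun p : KAx => p@_m) (mcoeffD m) (mcoeff0 _ m)).
under eq_bigr do under eq_bigr do rewrite mcoeffZ mcoeffX mon_eq.
case: (leqP (m o1 + m o2) d) => Hd.
  rewrite (@sum_single (fun i j => w i j * ([&& m o0 == d - (i + j), m o1 == i & m o2 == j]%N)%:R) (m o1) (m o2) Hd).
    rewrite !eqxx !andbT; case: eqP => H1; case: eqP => H2 /=;
      rewrite ?mulr1 ?mulr0 //; exfalso; lia.
  move=> i j Hij Hne; case: and3P => [[_ /eqP E1 /eqP E2]|_]; last by rewrite mulr0.
  by move: Hne; rewrite -E1 -E2 !eqxx.
rewrite big1; last first.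
  move=> i _; rewrite big1 // => j Hij.
  case: and3P => [[_ /eqP E1 /eqP E2]|_]; last by rewrite mulr0.
  exfalso; lia.
by case: eqP => // H; exfalso; lia.
Qed.

Lemma coefMXd l k (P : KAx) m : (mderiv l P * 'X_k)@_m =
  if (0 < m k)%N then P@_(m - U_(k) + U_(l))%MM *+ ((m - U_(k))%MM l).+1 else 0.
Proof. by rewrite mcoeffMX1 mcoeff_deriv; case: ifP. Qed.

Lemma cas_homog : casimir a d \is d.-homog.
Proof.
apply/dhomogP => m; rewrite mcoeff_msupp cas_coef.
case: (m o0 + m o1 + m o2 =P d)%N => [H _|_]; last by rewrite eqxx.
by apply: etrans (mdegE m) _; rewrite sum3 /= H.
Qed.


Lemma cov_pre f v1 v2 v3 m : (derAx f (xv v1 v2 v3) (casimir a d))@_m =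
  derA f (casimir a d)@_m + (mderiv o0 (casimir a d) * v1 + mderiv o1 (casimir a d) * v2
     + mderiv o2 (casimir a d) * v3)@_m.
Proof. by rewrite derAx_coef sum3. Qed.

Ltac cov_start := apply/mpolyP; let m := fresh "m" in intro m; rewrite mcoeff0 cov_pre /x1 /x2 /x3 ?mulr0 ?addr0 ?add0r ?mulrN
  ?mcoeffD ?mcoeffN ?coefMXd ?cas_coef ?mnmDE ?mnmBE ?mnm1E /=;
  move: (m o0) (m o1) (m o2); clear m.

Lemma covD1 : D1x (casimir a d) = 0.
Proof.
cov_start => m0 m1 m2; rewrite ?subn0 ?addn0 -[derA (gD1 K n)]/(@D1 K n).
case: m1 => [|m1] /=; first by case: ifP => _; rewrite ?wD1_0 ?(lin0 e1Z) oppr0 addr0.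
rewrite subn1 /= (_ : (m0 + 1 + m1 + m2 = m0 + m1.+1 + m2)%N); last by lia.
case: ifP => /eqP H; last by rewrite (lin0 e1Z) mul0rn oppr0 addr0.
rewrite wD1; last by lia.
by rewrite (_ : (d - (m1 + m2) = m0.+1)%N) ?addrN //; lia.
Qed.


Ltac ifs := repeat (case: ifP => /eqP ?); try (exfalso; lia).

Lemma covD2 : D2x (casimir a d) = 0.
Proof.
cov_start => m0 m1 m2; rewrite ?subn0 ?addn0 -[derA (gD2 K n)]/(@D2 K n).
case: m2 => [|m2] /=; first by case: ifP => _; rewrite ?wD2_0 ?(lin0 e2Z) oppr0 addr0.
rewrite ?subn1 /= ?addn1; ifs.
  by rewrite wD2 addrN.
by rewrite (lin0 e2Z) mul0rn oppr0 addr0.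
Qed.

Lemma covD3 : D3x (casimir a d) = 0.
Proof.
cov_start => m0 m1 m2; rewrite ?subn0 ?addn0 -[derA (gD3 K n)]/(@D3 K n).
case: m2 => [|m2] /=; first by case: ifP => _; rewrite ?wD3_0 ?(lin0 e3Z) oppr0 addr0.
rewrite ?subn1 /= ?addn1; ifs.
  rewrite wD3; last by lia.
  by rewrite (_ : (d - (m1 + m2) = m0.+1)%N) ?addrN //; lia.
by rewrite (lin0 e3Z) mul0rn oppr0 addr0.
Qed.

Lemma covF1 : hD1x (casimir a d) = 0.
Proof.
cov_start => m0 m1 m2; rewrite ?subn0 ?addn0 -[derA (gH1 K n)]/(@hD1 K n).
case: m0 => [|m0] /=.
  ifs; last by rewrite (lin0 F1Z) oppr0 addr0.
  by rewrite wF1 w_zero ?mul0rn ?oppr0 ?addr0 //; lia.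
rewrite ?subn1 /= ?addn1; ifs.
  by rewrite wF1 addrN.
by rewrite (lin0 F1Z) mul0rn oppr0 addr0.
Qed.

Lemma covF2 : hD2x (casimir a d) = 0.
Proof.
cov_start => m0 m1 m2; rewrite ?subn0 ?addn0 -[derA (gH2 K n)]/(@hD2 K n).
case: m1 => [|m1] /=; first by case: ifP => _; rewrite ?wF2_0 ?(lin0 F2Z) oppr0 addr0.
rewrite ?subn1 /= ?addn1; ifs.
  by rewrite wF2 addrN.
by rewrite (lin0 F2Z) mul0rn oppr0 addr0.
Qed.

Lemma covF3 : hD3x (casimir a d) = 0.
Proof.
cov_start => m0 m1 m2; rewrite ?subn0 ?addn0 -[derA (gH3 K n)]/(@hD3 K n).
case: m0 => [|m0] /=.
  ifs; last by rewrite (lin0 F3Z) oppr0 addr0.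
  by rewrite wF3 w_zero ?mul0rn ?oppr0 ?addr0 //; lia.
rewrite ?subn1 /= ?addn1; ifs.
  by rewrite wF3 addrN.
by rewrite (lin0 F3Z) mul0rn oppr0 addr0.
Qed.

Lemma covE1 : E1x (casimir a d) = 0.
Proof.
cov_start => m0 m1 m2; rewrite ?subn0 ?addn0 -[derA (gE1 K n)]/(@E1 K n).
case: m0 => [|m0]; case: m1 => [|m1]; rewrite /= ?subn1 /= ?addn1; ifs;
  rewrite ?(lin0 h1Z) ?mul0rn ?oppr0 ?addr0 ?add0r //;
  rewrite wE1 -?scaler_nat -?scaleNr -?scalerDl; apply/eqP; rewrite scaler_eq0; apply/orP; left;
  apply/eqP; match goal with H : (_ = d)%N |- _ => rewrite -H end; rewrite ?natrD; ring.
Qed.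

Lemma covE2 : E2x (casimir a d) = 0.
Proof.
cov_start => m0 m1 m2; rewrite ?subn0 ?addn0 -[derA (gE2 K n)]/(@E2 K n).
case: m1 => [|m1]; case: m2 => [|m2]; rewrite /= ?subn1 /= ?addn1; ifs;
  rewrite ?(lin0 h2Z) ?mul0rn ?oppr0 ?addr0 ?add0r //;
  rewrite wE2 -?scaler_nat -?scaleNr -?scalerDl; apply/eqP; rewrite scaler_eq0; apply/orP; left;
  apply/eqP; rewrite ?natrD; ring.
Qed.

End Main.

Unset Implicit Arguments.

Theorem mainTheorem5 (K : fieldType) (charK0 : [pchar K] =i pred0)
    (n : nat) (n_ge1 : (1 <= n)%N) (d : nat) (a : KA K n)
    (a_homog : exists da : nat, a \is da.-homog)
    (a_isobaric : isobaric a)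
    (a_inv : UTinv a)
    (a_irr : UTirred a)
    (a_ord1 : has_ord (hD1 (n:=n)) a d)
    (a_ord2 : has_ord (hD2 (n:=n)) a 0) :
  iso_Gamma (Bbar a d) d 0 /\ covariant d (casimir a d).
Proof.
move: a_isobaric a_inv a_ord1 a_ord2 => [a0 [l1 [l2 [aE1 aE2]]]] [aD1 [aD2 aD3]] [aF1dn aF1] [_ aF2].
have aF1d := aF1 d.+1 (ltnSn d).
have aF2' : hD2 a = 0 by exact: (aF2 1%N isT).
split; first by eapply partI; eassumption.
split; first by eapply cas_homog; eassumption.
split; first by eapply covD1; eassumption.
split; first by eapply covD2; eassumption.
split; first by eapply covD3; eassumption.
split; first by eapply covF1; eassumption.
split; first by eapply covF2; eassumption.
split; first by eapply covF3; eassumption.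
split; first by eapply covE1; eassumption.
by eapply covE2; eassumption.
Qed.
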